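(* Assume Dickson's conjecture. Then there are infinitely many positive integers $n$ such that $$r(n,n)\ge \frac{9}{8}-\frac{9}{8n}.$$
   Context: $\phi$ denotes Euler's totient function. For positive integers $a,b$, $c(a,b)$ is the least positive integer $c$ such that $\phi(a!)\,\phi(b!)$ divides $\phi(c!)$, and $r(a,b)=c(a,b)/(a+b)$. Dickson's conjecture: Let $a_1,\dots,a_k$ be integers and $b_1,\dots,b_k$ positive integers. If there is no prime $q$ such that $q$ divides $\prod_{i=1}^k(a_i+b_in)$ for every $n\in\{0,1,\dots,q-1\}$, then there are infinitely many positive integers $n$ for which $a_1+b_1n,\dots,a_k+b_kn$ are all prime. *)

(* Defs.v *)
From mathcomp Require Import all_boot all_order all_algebra.
Set Implicit Arguments. Unset Strict Implicit. Unset Printing Implicit Defensive.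
Import Order.TTheory GRing.Theory Num.Theory.
Local Open Scope ring_scope.

Definition dickson_conjecture : Prop :=
  forall (k : nat) (a : 'I_k -> int) (b : 'I_k -> nat),
    (forall i, 0 < b i)%N ->
    ~ (exists q : nat, prime q /\
         forall n : nat, (n < q)%N ->
           (Posz q %| \prod_(i < k) (a i + Posz (b i * n)))%Z) ->
    forall N : nat, exists n : nat, (N < n)%N /\
      forall i, exists p : nat, prime p /\ a i + Posz (b i * n) = Posz p.

Definition is_c (a b c : nat) : Prop :=
  (0 < c)%N /\ (totient a`! * totient b`! %| totient c`!)%N /\
  forall c' : nat, (0 < c')%N -> (totient a`! * totient b`! %| totient c'`!)%N ->
    (c <= c')%N.

Definition r_of (a b c : nat) : rat := (c%:R / (a + b)%:R)%R.

(* Main.v *)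
Require Import Defs.
From mathcomp Require Import all_boot all_order all_algebra.
From mathcomp Require Import zify ring lra.
Import Order.TTheory GRing.Theory Num.Theory.
Set Implicit Arguments. Unset Strict Implicit. Unset Printing Implicit Defensive.

Lemma phi_pY p Y : prime p -> p %| Y -> 0 < Y -> totient (p * Y) = p * totient Y.
Proof.
move=> pp pY Y0.
case: (pfactor_coprime pp Y0) => m cm defY.
have k0 : 0 < logn p Y by rewrite logn_gt0 mem_primes pp Y0 pY.
move: defY k0; set k := logn p Y => defY k0.
have pm: coprime m (p ^ k.+1) by apply: coprimeXr; rewrite coprime_sym.
have -> : p * Y = m * p ^ k.+1 by rewrite defY expnS mulnCA.
rewrite totient_coprime // totient_pfactor //=.
rewrite [in RHS]defY totient_coprime; last by apply: coprimeXr; rewrite coprime_sym.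
rewrite totient_pfactor //.
rewrite -(prednK k0) /= expnS; lia.
Qed.

Lemma phi_mul m X : 0 < X -> (forall p, prime p -> p %| m -> p %| X) ->
  totient (m * X) = m * totient X.
Proof.
move=> X0; elim: m {-2}m (leqnn m) => [|M IH] m hm H.
  by move: hm; rewrite leqn0 => /eqP ->; rewrite !mul0n.
case: m hm H => [|[|m]] hm H; [by rewrite !mul0n|by rewrite !mul1n|].
set m2 := m.+2.
have pp := pdiv_prime (isT : 1 < m2).
have pd := pdiv_dvd m2.
have -> : m2 * X = pdiv m2 * (m2 %/ pdiv m2 * X) by rewrite mulnA [pdiv m2 * _]mulnC divnK.
rewrite phi_pY //; last first.
  by rewrite muln_gt0 X0 divn_gt0 ?prime_gt0 // dvdn_leq.
  by rewrite dvdn_mull // H.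
rewrite IH //.
- by rewrite mulnA [pdiv m2 * _]mulnC divnK.
- rewrite -ltnS (leq_trans _ hm) // ltn_Pdiv // prime_gt1 //.
- by move=> q qp qd; apply: H => //; exact: dvdn_trans qd (dvdn_div pd).
Qed.

Definition g j := if prime j then j.-1 else j.

Lemma not_dvd_fact p c : prime p -> c < p -> ~~ (p %| c`!).
Proof.
move=> pp; elim: c => [|c IH] cp; first by rewrite Euclid_dvd1.
rewrite factS Euclid_dvdM // negb_or IH ?(ltnW cp) // andbT.
by rewrite gtnNdvd.
Qed.

Lemma phi_factS c : 0 < c -> totient (c.+1)`! = g c.+1 * totient c`!.
Proof.
move=> c0; rewrite factS /g; case: ifP => pc.
  rewrite totient_coprime ?(totient_prime pc) //.
  by rewrite prime_coprime // not_dvd_fact.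
apply: phi_mul; first by rewrite fact_gt0.
move=> p pp pd; apply: dvdn_fact; rewrite prime_gt0 //=.
have := dvdn_leq (isT : 0 < c.+1) pd; rewrite leq_eqVlt => /orP[/eqP e|] //.
by move: pc; rewrite -e pp.
Qed.

Lemma g_gt0 j : 1 < j -> 0 < g j.
Proof. by rewrite /g; case: ifP => //; case: j => [|[|j]]. Qed.

Lemma phi_fact c : totient c`! = \prod_(2 <= j < c.+1) g j.
Proof.
elim: c => [|[|c] IH]; first by rewrite big_geq.
  by rewrite big_geq.
by rewrite phi_factS // IH [in RHS]big_nat_recr //= mulnC.
Qed.

Lemma logn_phi l c : logn l (totient c`!) = \sum_(2 <= j < c.+1) logn l (g j).
Proof.
elim: c => [|[|c] IH]; first by rewrite big_geq //; exact: logn1.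
  by rewrite big_geq //; exact: logn1.
by rewrite phi_factS // lognM ?g_gt0 ?totient_gt0 ?fact_gt0 // IH [in RHS]big_nat_recr //= addnC.
Qed.

Definition Sset l := [:: 2 * l; 3 * l; 4 * l; 5 * l; 6 * l; 7 * l; 8 * l; 9 * l; 10 * l; 11 * l; 12 * l;
  13 * l; 14 * l; 15 * l; 16 * l; 17 * l; 2 * l+1; 6 * l+1; 8 * l+1].
Definition Tset l := [:: 2 * l; 3 * l; 4 * l; 5 * l; 6 * l; 7 * l; 8 * l; 2 * l+1; 6 * l+1; 8 * l+1].

Lemma lg_small l j : prime l -> 0 < j -> j < l * l -> logn l j <= 1.
Proof.
move=> pl j0 jl; rewrite leqNgt; apply/negP => h.
have : l ^ 2 %| j by rewrite pfactor_dvdn.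
move/(dvdn_leq j0); rewrite expnS expn1; lia.
Qed.

Lemma np j d : prime j -> d %| j -> 1 < d -> d < j -> False.
Proof.
move=> pj dj d1 dj'; case/primeP: pj => _ /(_ d dj) /orP[] /eqP; lia.
Qed.

Lemma prime_k t l k : l = 11 + 210 * t -> 0 < t -> prime (k * l + 1) ->
  0 < k -> k < 18 -> (k == 2) || (k == 6) || (k == 8).
Proof.
move=> hl t0; case: k => [|k]; first by [].
do 17 (try (case: k => [|k])).
all: try (move=> *; by []).
all: try (move=> _ _; lia).
all: move=> pj _ _; exfalso.
all: first [ apply: (np pj (_ : 2 %| _)); lia
          | apply: (np pj (_ : 3 %| _)); lia
          | apply: (np pj (_ : 5 %| _)); lia
          | apply: (np pj (_ : 7 %| _)); lia ].
Qed.

Lemma upper_pt t l j : l = 11 + 210 * t -> 0 < t -> prime l ->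
  2 <= j -> j < 18 * l -> logn l (g j) <= (j \in Sset l).
Proof.
move=> hl t0 pl j2 jl.
case: (posnP (logn l (g j))) => [->|pos] //.
have d : l %| g j by move: pos; rewrite logn_gt0 mem_primes => /and3P[].
have -> : j \in Sset l.
  move: d; rewrite /g; case: ifP => pj /dvdnP [k hk].
  { have hj : j = k * l + 1 by lia.
    have k0 : 0 < k by case: k hj hk => [|k] //; lia.
    have k18 : k < 18 by nia.
    have pj2 : prime (k * l + 1) by rewrite -hj.
    have hh := prime_k hl t0 pj2 k0 k18.
    have [ek|[ek|ek]] : k = 2 \/ k = 6 \/ k = 8 by lia.
    all: by rewrite hj ek /Sset !inE eqxx ?orbT. }
  { have k18 : k < 18 by nia.
    case: k hk k18 => [|[|k]] hk k18; try lia.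
      by move: pj; rewrite hk mul1n pl.
    rewrite hk; clear hk; move: k18.
    do 16 (try (case: k => [|k])); try lia.
    all: by move=> _; rewrite /Sset !inE eqxx ?orbT. }
apply: lg_small => //; first exact: g_gt0.
apply: (@leq_ltn_trans j); first by rewrite /g; case: ifP => _ //; exact: leq_pred.
nia.
Qed.

Lemma lower_pt l j : prime l -> prime (2 * l + 1) -> prime (6 * l + 1) ->
  prime (8 * l + 1) -> j \in Tset l -> 0 < logn l (g j).
Proof.
move=> pl p2 p6 p8.
have l1 := prime_gt1 pl.
have H1 k : 1 < k -> 0 < logn l (g (k * l)).
  move=> k1; rewrite /g; case: ifP => pk.
    by exfalso; apply: (np pk (_ : l %| k * l)) => //; [exact: dvdn_mull|nia].
  by rewrite logn_gt0 mem_primes pl dvdn_mull // andbT; nia.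
have H2 k : prime (k * l + 1) -> 0 < logn l (g (k * l + 1)).
  move=> pk; rewrite /g pk addn1 /=.
  have := prime_gt1 pk; rewrite addn1 ltnS => kl.
  by rewrite logn_gt0 mem_primes pl kl dvdn_mull.
rewrite /Tset !inE.
do 9 (case/orP; [move/eqP->; first [by apply: H1 | by apply: H2] |]).
by move/eqP->; apply: H2.
Qed.

Lemma sum_count (r : seq nat) (a : pred nat) : \sum_(j <- r) a j = count a r.
Proof. by elim: r => [|x r IH]; rewrite ?big_nil ?big_cons ?IH. Qed.

Lemma count_le_size (r s : seq nat) : uniq r -> count (mem s) r <= size s.
Proof.
move=> ur; rewrite -size_filter; apply: uniq_leq_size; first exact: filter_uniq.
by move=> x; rewrite mem_filter => /andP[].
Qed.

Lemma size_le_count (r s : seq nat) : uniq s -> {subset s <= r} ->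
  size s <= count (mem s) r.
Proof.
move=> us H; rewrite -size_filter; apply: uniq_leq_size => // x xs.
by rewrite mem_filter; apply/andP; split => //; exact: H.
Qed.

Lemma upper t l c : l = 11 + 210 * t -> 0 < t -> prime l -> c < 18 * l ->
  logn l (totient c`!) <= 19.
Proof.
move=> hl t0 pl cl; rewrite logn_phi.
apply: (@leq_trans (\sum_(2 <= j < c.+1) (j \in Sset l))).
  rewrite big_nat_cond [X in _ <= X]big_nat_cond; apply: leq_sum => j.
  move=> /andP[/andP[j2 jc] _]; apply: (upper_pt hl) => //; lia.
rewrite sum_count; apply: (leq_trans (count_le_size _ _)) => //.
by rewrite /index_iota iota_uniq.
Qed.

Lemma lower l : prime l -> prime (2 * l + 1) -> prime (6 * l + 1) ->
  prime (8 * l + 1) -> 10 <= logn l (totient (8 * l + 1)`!).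
Proof.
move=> pl p2 p6 p8; have l1 := prime_gt1 pl; rewrite logn_phi.
apply: (@leq_trans (\sum_(2 <= j < (8 * l + 1).+1) (j \in Tset l))); last first.
  apply: leq_sum => j _; have [h|] := boolP (j \in Tset l); last by [].
  exact: lower_pt.
rewrite sum_count; apply: (leq_trans _ (size_le_count _ _)) => //.
  rewrite /Tset /= !inE; lia.
move=> x; rewrite mem_index_iota /Tset !inE => hx; lia.
Qed.

Lemma phi_dvd a b : a <= b -> totient a`! %| totient b`!.
Proof.
elim: b => [|b IH]; first by rewrite leqn0 => /eqP ->.
rewrite leq_eqVlt => /orP[/eqP -> //|]; rewrite ltnS => ab.
case: b IH ab => [|b] IH ab; first by move: ab; rewrite leqn0 => /eqP ->.
by rewrite phi_factS // dvdn_mull // IH.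
Qed.

Lemma exist_c n : 0 < n -> exists c, (0 < c) && (totient n`! * totient n`! %| totient c`!).
Proof.
move=> n0; set P := totient n`!.
have P0 : 0 < P by rewrite totient_gt0 fact_gt0.
exists (4 * P * n.+1); rewrite !muln_gt0 P0 /=.
set m := 4 * P * n.+1.
have m8 : 8 <= m.
  have h2 : 1 * 2 <= P * n.+1 by apply: leq_mul.
  by rewrite /m -mulnA; move: h2; clear; lia.
have mn : n < m by apply: leq_pmull; rewrite muln_gt0 P0.
have -> : m = (m.-1).+1 by lia.
rewrite phi_factS; last by lia.
have -> : g (m.-1).+1 = m.
  rewrite /g prednK; last by lia.
  case: ifP => // pm; exfalso; apply: (np pm (_ : 2 %| m)); rewrite /m; lia.
apply: dvdn_mul; first by rewrite /m -mulnA dvdn_mull // dvdn_mulr.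
apply: phi_dvd; lia.
Qed.


Definition fa (i : 'I_4) : nat := nth 0 [:: 11; 23; 67; 89] i.
Definition fb (i : 'I_4) : nat := nth 0 [:: 210; 420; 1260; 1680] i.

Lemma fb0 i : 0 < fb i.
Proof. by case: i => [[|[|[|[|m]]]] hm]. Qed.

Lemma fb5040 i : fb i %| 5040.
Proof. by case: i => [[|[|[|[|m]]]] hm]. Qed.

Lemma small_div q : prime q -> q %| 5040 -> q <= 7.
Proof.
move=> pq; rewrite (_ : 5040 = 2 * 2 * 2 * 2 * 3 * 3 * 5 * 7) // !Euclid_dvdM //.
have L d : (0 < d)%N -> (d < 8)%N -> q %| d -> q <= 7.
  by move=> d0 d8 hd; have := dvdn_leq d0 hd; lia.
by move=> H; repeat (case/orP: H => H); apply: (L _ _ _ H).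
Qed.

Section S2.
Local Open Scope ring_scope.
Lemma adm : ~ (exists q : nat, prime q /\ forall n : nat, (n < q)%N ->
   (Posz q %| \prod_(i < 4) (Posz (fa i) + Posz (fb i * n)))%Z).
Proof.
case=> q [pq H].
have H' : forall n, (n < q)%N -> exists i : 'I_4, (q %| fa i + fb i * n)%N.
  move=> n nq; have := H n nq.
  rewrite (_ : \prod_(i < 4) (Posz (fa i) + Posz (fb i * n)) =
            Posz (\prod_(i < 4) (fa i + fb i * n))%N); last first.
    by rewrite (big_morph Posz PoszM (erefl (Posz 1))).
  rewrite dvdzE /= Euclid_dvd_prod // big_has => /hasP [i _ hi].
  by exists i.
have [q8|q8] := ltnP q 8.
  have [i hi] := H' 0%N (prime_gt0 pq).
  move: pq q8 hi; clear H H'.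
  case: i => [[|[|[|[|m]]]] hm]; rewrite /fa /fb /=;
  do 8 (try (case: q => [|q])); try (move=> *; lia); by [].
pose h (n : 'I_5) := odflt ord0 [pick i | (q %| fa i + fb i * n)%N].
have hP (n : 'I_5) : (q %| fa (h n) + fb (h n) * n)%N.
  rewrite /h; case: pickP => [i //|none]; exfalso.
  have nq : (n < q)%N by have := ltn_ord n; lia.
  have [i hi] := H' n nq.
  by move: (none i); rewrite hi.
have : ~~ injectiveb h.
  apply/negP => /injectiveP inj; have := @leq_card _ _ h inj; rewrite !card_ord.
  by [].
case/injectivePn => n1 [n2 ne e].
have d1 := hP n1; have d2 := hP n2; rewrite -e in d2.
move: d1 d2; set i := h n1 => d1 d2.
have k1 : (q %| fb i * (n1 - n2))%N.
  by rewrite mulnBr -(subnDl (fa i)); apply: dvdn_sub.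
have k2 : (q %| fb i * (n2 - n1))%N.
  by rewrite mulnBr -(subnDl (fa i)); apply: dvdn_sub.
have nb : ~~ (q %| fb i)%N.
  apply/negP => hq; have := small_div pq (dvdn_trans hq (fb5040 i)); lia.
move: k1 k2; rewrite !Euclid_dvdM // (negbTE nb) /= => k1 k2.
have n15 := ltn_ord n1; have n25 := ltn_ord n2.
have ne' : (val n1 != val n2) by [].
case: (ltngtP n1 n2) => c.
- have := dvdn_leq _ k2; lia.
- have := dvdn_leq _ k1; lia.
- by move/val_inj: c => c; rewrite c eqxx in ne.
Qed.
End S2.

Section RatSec.
Local Open Scope ring_scope.
Lemma ratineq (l c n : nat) : n = (8 * l + 1)%N -> (18 * l <= c)%N ->
  (9%:R / 8%:R - 9%:R / (8 * n)%:R : rat) <= c%:R / (n + n)%:R.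
Proof.
move=> -> h.
have x0 : 0 <= (l%:R : rat) by apply: ler0n.
have -> : (9%:R / 8%:R - 9%:R / (8 * (8 * l + 1)%N)%:R : rat) =
   (18 * l)%N%:R / ((8 * l + 1)%N + (8 * l + 1)%N)%:R.
  rewrite !natrM !natrD; field.
  by apply/andP; split; rewrite lt0r_neq0 //; lra.
rewrite ler_pM2r ?ler_nat //.
by rewrite invr_gt0 ltr0n; lia.
Qed.
End RatSec.

Theorem theorem1p4 :
  dickson_conjecture ->
  forall N : nat, exists n : nat, (N < n)%N /\
    exists c : nat, is_c n n c /\
      ((9%:R / 8%:R - 9%:R / (8 * n)%:R : rat) <= r_of n n c)%R.
Proof.
move=> D N.
have [t [Nt Ht]] := D 4 (fun i => Posz (fa i)) fb fb0 adm N.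
have P (i : 'I_4) : prime (fa i + fb i * t).
  case: (Ht i) => p [pp e]; move: e => /= /eqP; rewrite -PoszD eqz_nat => /eqP ->.
  exact: pp.
pose l := 11 + 210 * t.
have hl : l = 11 + 210 * t by [].
have pl : prime l := P (@Ordinal 4 0 isT).
have p2 : prime (2 * l + 1).
  by rewrite (_ : 2 * l + 1 = 23 + 420 * t); [exact: P (@Ordinal 4 1 isT) | lia].
have p6 : prime (6 * l + 1).
  by rewrite (_ : 6 * l + 1 = 67 + 1260 * t); [exact: P (@Ordinal 4 2 isT) | lia].
have p8 : prime (8 * l + 1).
  by rewrite (_ : 8 * l + 1 = 89 + 1680 * t); [exact: P (@Ordinal 4 3 isT) | lia].
have t0 : 0 < t by lia.
exists (8 * l + 1); split; first by lia.
have n0 : 0 < 8 * l + 1 by rewrite addn1.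
have [c0 hc0] := exist_c n0.
case: (ex_minnP (ex_intro (fun c => (0 < c) && (totient (8 * l + 1)`! * totient (8 * l + 1)`! %| totient c`!)) c0 hc0)) => c /andP[cpos cd] cmin.
exists c; split.
  split => //; split => // c' c'0 c'd; apply: cmin; by rewrite c'0 c'd.
have cl : 18 * l <= c.
  rewrite leqNgt; apply/negP => cl.
  have up := upper hl t0 pl cl.
  have lo := lower pl p2 p6 p8.
  have : l ^ 20 %| totient c`!.
    apply: dvdn_trans cd.
    rewrite pfactor_dvdn // ?muln_gt0 ?totient_gt0 ?fact_gt0 // lognM ?totient_gt0 ?fact_gt0 //.
    lia.
  rewrite pfactor_dvdn // ?totient_gt0 ?fact_gt0 //; lia.
rewrite /r_of; exact (@ratineq l c (8 * l + 1) erefl cl).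
Qed.
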